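(* Let $m,n\ge 1$, let $0\le\theta\le 1$, let $0<p<1$, let $\lambda>0$, and let $\mathbf{Y}\in\mathbb{R}^{m\times n}$ have full singular value decomposition $\mathbf{Y}=\mathbf{U}\mathbf{\Sigma}\mathbf{V}^\mathsf{T}$ with $\mathbf{\Sigma}=\mathrm{diag}(\sigma_1,\sigma_2,\ldots,\sigma_{\min\{m,n\}})$, $\sigma_1\ge\sigma_2\ge\cdots\ge\sigma_{\min\{m,n\}}\ge 0$. Put $r=\lceil\theta\cdot\min\{m,n\}\rceil$. Then the optimal solution of $$\min_{\mathbf{M}\in\mathbb{R}^{m\times n}}\ \lambda\Vert\mathbf{M}\Vert_{\theta,S_p}^p+\frac{1}{2}\Vert\mathbf{M}-\mathbf{Y}\Vert_F^2$$ is given by $\mathbf{M}_{opt}=\mathbf{U}\mathbf{\Delta}\mathbf{V}^\mathsf{T}$, where $\mathbf{\Delta}=\mathrm{diag}(\sigma_1,\ldots,\sigma_r,\delta_{r+1},\ldots,\delta_{\min\{m,n\}})$ is arranged in the same (non-ascending) order as $\mathbf{\Sigma}$, and the diagonal entries $\delta_i$ ($i>r$) are given by the problem $$\min_{\delta_i\ge 0}\ \sum_{i=r+1}^{\min\{m,n\}}\Big(\lambda\delta_i^p+\tfrac{1}{2}(\delta_i-\sigma_i)^2\Big)\quad\text{s.t. } \delta_i\ge\delta_j \text{ for } i\le j,\ i,j\in\{r+1,\ldots,\min\{m,n\}\}.$$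
   Context: For a matrix $\mathbf{M}\in\mathbb{R}^{m\times n}$ with singular values $\sigma_1(\mathbf{M})\ge\cdots\ge\sigma_{\min\{m,n\}}(\mathbf{M})\ge0$, a truncation rate $\theta\in[0,1]$ and $r=\lceil\theta\cdot\min\{m,n\}\rceil$ (smallest integer not less than $\theta\min\{m,n\}$), the $p$-th power of the truncated Schatten $p$-norm is $\Vert\mathbf{M}\Vert_{\theta,S_p}^p=\sum_{i=r+1}^{\min\{m,n\}}\sigma_i(\mathbf{M})^p$, i.e. only the smallest $\min\{m,n\}-r$ singular values contribute. $\Vert\cdot\Vert_F$ is the Frobenius norm. *)

(* Defs.v *)
From HB Require Import structures.
From mathcomp Require Import all_boot all_order all_algebra.
From mathcomp Require Import reals exp.
Set Implicit Arguments. Unset Strict Implicit. Unset Printing Implicit Defensive.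
Import Order.TTheory GRing.Theory Num.Theory.
Local Open Scope ring_scope.

Section Defs.
Variable R : realType.

Definition rdiag (m n : nat) (d : nat -> R) : 'M[R]_(m, n) :=
  \matrix_(i < m, j < n) (if (i : nat) == (j : nat) then d i else 0).

Definition orthomx (k : nat) (U : 'M[R]_k) : Prop := U^T *m U = 1%:M.

Definition is_svd (m n : nat) (Y : 'M[R]_(m, n)) (U : 'M[R]_m) (s : nat -> R)
    (V : 'M[R]_n) : Prop :=
  [/\ orthomx U, orthomx V, Y = U *m rdiag m n s *m V^T,
      (forall i, (i < minn m n)%N -> 0 <= s i) &
      (forall i j, (i <= j)%N -> (j < minn m n)%N -> s j <= s i)].

Definition is_singvals (m n : nat) (M : 'M[R]_(m, n)) (s : nat -> R) : Prop :=
  exists U V, is_svd M U s V.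

Definition trunc_rank (theta : R) (m n : nat) : nat :=
  `|Num.ceil (theta * (minn m n)%:R)|%N.

(* p-th power of the truncated Schatten p-norm, computed from the singular
   values s of M: sum of s_i^p over 0-based indices r <= i < min(m,n) *)
Definition trunc_schatten_pow (theta p : R) (m n : nat) (s : nat -> R) : R :=
  \sum_(trunc_rank theta m n <= i < minn m n) powR (s i) p.

Definition frob2 (m n : nat) (A : 'M[R]_(m, n)) : R :=
  \sum_(i < m) \sum_(j < n) (A i j) ^+ 2.

(* objective value lambda ||M||_{theta,S_p}^p + 1/2 ||M - Y||_F^2, where s are
   the singular values of M *)
Definition objective (theta p lambda : R) (m n : nat) (Y M : 'M[R]_(m, n))
    (s : nat -> R) : R :=
  lambda * trunc_schatten_pow theta p m n s + 2^-1 * frob2 (M - Y).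

Definition delta_obj (lambda p : R) (r k : nat) (sigma d : nat -> R) : R :=
  \sum_(r <= i < k) (lambda * powR (d i) p + 2^-1 * (d i - sigma i) ^+ 2).

Definition delta_feasible (r k : nat) (d : nat -> R) : Prop :=
  (forall i, (r <= i)%N -> (i < k)%N -> 0 <= d i) /\
  (forall i j, (r <= i)%N -> (i <= j)%N -> (j < k)%N -> d j <= d i).

End Defs.

(* Main.v *)
Require Import Defs.
From HB Require Import structures.
From mathcomp Require Import all_boot all_order all_algebra.
From mathcomp Require Import reals exp.
From mathcomp Require Import ring lra.
Import Order.TTheory GRing.Theory Num.Theory.
Local Open Scope ring_scope.

Definition mxf {R : realType} {m n : nat} (A : 'M[R]_(m, n)) (i j : nat) : R :=
  match (insub i : option 'I_m), (insub j : option 'I_n) with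
  | Some i', Some j' => A i' j' | _, _ => 0 end.

Lemma mxfE {R : realType} {m n : nat} (A : 'M[R]_(m, n)) (i : 'I_m) (j : 'I_n) :
  mxf A i j = A i j.
Proof. by rewrite /mxf !valK. Qed.

Lemma mxfN {R : realType} {m n : nat} (A : 'M[R]_(m, n)) (i j : nat)
  (hi : (i < m)%N) (hj : (j < n)%N) : mxf A i j = A (Ordinal hi) (Ordinal hj).
Proof. by rewrite /mxf (insubT (fun x => x < m)%N hi) (insubT (fun x => x < n)%N hj). Qed.

Lemma mxf0l {R : realType} {m n : nat} (A : 'M[R]_(m, n)) (i j : nat) :
  (m <= i)%N -> mxf A i j = 0.
Proof. by move=> h; rewrite /mxf insubF // ltnNge h. Qed.

Lemma mxf0r {R : realType} {m n : nat} (A : 'M[R]_(m, n)) (i j : nat) :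
  (n <= j)%N -> mxf A i j = 0.
Proof.
move=> h; rewrite /mxf (@insubF _ (fun x => (x < n)%N) _ j); last by rewrite ltnNge h.
by case: insub.
Qed.
Lemma sum_nat_pick {R : realType} (k i : nat) (F : nat -> R) :
  (i < k)%N -> \sum_(0 <= j < k) (if j == i then F j else 0) = F i.
Proof.
move=> hik; rewrite big_mkord (bigD1 (Ordinal hik)) //= eqxx big1 ?addr0 //.
by move=> j; rewrite -(inj_eq val_inj) /= => /negbTE ->.
Qed.

Lemma sum_nat_le {R : realType} (k m : nat) (F : nat -> R) :
  (k <= m)%N -> (forall i, (k <= i < m)%N -> 0 <= F i) ->
  \sum_(0 <= j < k) F j <= \sum_(0 <= j < m) F j.
Proof.
move=> hkm hF; rewrite (big_cat_nat (leq0n k) hkm) /= lerDl.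
by rewrite big_nat_cond; apply: sumr_ge0 => i /andP[/hF].
Qed.

Definition ind {R : realType} (b : bool) : R := (b : nat)%:R.

Lemma expand {R : realType} (k : nat) (c d : nat -> R) (I : nat -> nat -> R)
  (W : nat -> nat -> R) :
  \sum_(0 <= i < k) \sum_(0 <= j < k)
     (\sum_(0 <= s < k) c s * I i s) * (\sum_(0 <= t < k) d t * I j t) * W i j
  = \sum_(0 <= s < k) \sum_(0 <= t < k) c s * d t *
      (\sum_(0 <= i < k) \sum_(0 <= j < k) I i s * I j t * W i j).
Proof.
transitivity (\sum_(0 <= i < k) \sum_(0 <= j < k) \sum_(0 <= s < k)
   \sum_(0 <= t < k) c s * d t * (I i s * I j t * W i j)).
  apply: eq_bigr => i _; apply: eq_bigr => j _.
  rewrite mulr_suml mulr_suml; apply: eq_bigr => s _.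
  rewrite mulr_sumr mulr_suml; apply: eq_bigr => t _.
  ring.
under eq_bigr do rewrite exchange_big_nat.
rewrite exchange_big_nat; apply: eq_bigr => s _.
under eq_bigr do rewrite exchange_big_nat.
rewrite exchange_big_nat; apply: eq_bigr => t _.
rewrite mulr_sumr; apply: eq_bigr => i _.
by rewrite mulr_sumr.
Qed.

Lemma ind_ge0 {R : realType} (b : bool) : 0 <= ind b :> R.
Proof. by case: b; rewrite /ind. Qed.

Lemma ind_le1 {R : realType} (b : bool) : ind b <= 1 :> R.
Proof. by case: b; rewrite /ind. Qed.

Lemma mul_ind {R : realType} (x : R) (b : bool) : x * ind b = if b then x else 0.
Proof. by case: b; rewrite /ind ?mulr1 ?mulr0. Qed.

Lemma decomp {R : realType} (k : nat) (a : nat -> R) :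
  (forall i, (i < k)%N -> 0 <= a i) ->
  (forall i j, (i <= j)%N -> (j < k)%N -> a j <= a i) ->
  exists c : nat -> R, (forall s, (s < k)%N -> 0 <= c s) /\
    (forall i, (i < k)%N -> a i = \sum_(0 <= s < k) c s * ind (i <= s)%N).
Proof.
move=> ha0 hamon.
pose a' s := if (s < k)%N then a s else 0.
exists (fun s => a' s - a' s.+1); split.
  move=> s hs; rewrite subr_ge0 /a' hs; case: ifP => hs1; last exact: ha0.
  by apply: hamon.
move=> i hik; rewrite (big_cat_nat (leq0n i) (ltnW hik)) /=.
rewrite big_nat_cond big1 ?add0r; last first.
  by move=> s /andP[/andP[_ hs] _]; rewrite /ind leqNgt hs mulr0.
rewrite (eq_big_nat _ _ (F2 := fun s => (- a' s.+1) - (- a' s))); last first.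
  by move=> s /andP[hs _]; rewrite /ind hs mulr1 opprK addrC.
by rewrite telescope_sumr ?(ltnW hik) // /a' ltnn hik oppr0 opprK add0r.
Qed.

Lemma key_block {R : realType} (k s t : nat) (W : nat -> nat -> R) :
  (forall i j, 0 <= W i j) ->
  (forall i, (i < k)%N -> \sum_(0 <= j < k) W i j <= 1) ->
  (forall j, (j < k)%N -> \sum_(0 <= i < k) W i j <= 1) ->
  \sum_(0 <= i < k) \sum_(0 <= j < k) ind (i <= s)%N * ind (j <= t)%N * W i j
  <= \sum_(0 <= i < k) \sum_(0 <= j < k) ind (i <= s)%N * ind (j <= t)%N * ind (i == j).
Proof.
move=> W0 hrow hcol.
have -> : \sum_(0 <= i < k) \sum_(0 <= j < k) ind (i <= s)%N * ind (j <= t)%N * ind (i == j)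
   = \sum_(0 <= i < k) ind (i <= s)%N * ind (i <= t)%N :> R.
  apply: eq_big_nat => i /andP[_ hi].
  rewrite -(sum_nat_pick _ _ (fun j => ind (i <= s)%N * ind (j <= t)%N) hi).
  by apply: eq_bigr => j _; rewrite mul_ind eq_sym.
case: (leqP s t) => hst.
  have -> : \sum_(0 <= i < k) ind (i <= s)%N * ind (i <= t)%N
     = \sum_(0 <= i < k) ind (i <= s)%N * 1 :> R.
    apply: eq_bigr => i _; case: (leqP i s) => his.
      by rewrite (leq_trans his hst).
    by rewrite /ind !mul0r.
  apply: ler_sum_nat => i /andP[_ hi].
  under eq_bigr do rewrite -mulrA.
  rewrite -mulr_sumr; apply: ler_wpM2l; first exact: ind_ge0.
  apply: le_trans (hrow i hi).
  by apply: ler_sum => j _; apply: ler_piMl => //; apply: ind_le1.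
have -> : \sum_(0 <= i < k) ind (i <= s)%N * ind (i <= t)%N
   = \sum_(0 <= j < k) ind (j <= t)%N * 1 :> R.
  apply: eq_bigr => i _; case: (leqP i t) => hit.
    by rewrite (leq_trans hit (ltnW hst)) mulr1.
  by rewrite /ind mulr0 mul0r.
rewrite exchange_big_nat.
apply: ler_sum_nat => j /andP[_ hj].
under eq_bigr do rewrite (mulrC (ind _)) -mulrA.
rewrite -mulr_sumr; apply: ler_wpM2l; first exact: ind_ge0.
apply: le_trans (hcol j hj).
by apply: ler_sum => i _; apply: ler_piMl => //; apply: ind_le1.
Qed.

Lemma abel {R : realType} (k : nat) (a b : nat -> R) (w : nat -> nat -> R) :
  (forall i, (i < k)%N -> 0 <= a i) ->
  (forall i j, (i <= j)%N -> (j < k)%N -> a j <= a i) ->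
  (forall i, (i < k)%N -> 0 <= b i) ->
  (forall i j, (i <= j)%N -> (j < k)%N -> b j <= b i) ->
  (forall i, (i < k)%N -> \sum_(0 <= j < k) `|w i j| <= 1) ->
  (forall j, (j < k)%N -> \sum_(0 <= i < k) `|w i j| <= 1) ->
  \sum_(0 <= i < k) \sum_(0 <= j < k) a i * b j * w i j
  <= \sum_(0 <= i < k) a i * b i.
Proof.
move=> ha0 ham hb0 hbm hrow hcol.
apply: (@le_trans _ _ (\sum_(0 <= i < k) \sum_(0 <= j < k) a i * b j * `|w i j|)).
  apply: ler_sum_nat => i /andP[_ hi]; apply: ler_sum_nat => j /andP[_ hj].
  by apply: ler_wpM2l; [apply: mulr_ge0; [apply: ha0|apply: hb0] | apply: ler_norm].
have [c [hc0 hca]] := decomp _ _ ha0 ham.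
have [d [hd0 hdb]] := decomp _ _ hb0 hbm.
have -> : \sum_(0 <= i < k) a i * b i =
   \sum_(0 <= i < k) \sum_(0 <= j < k) a i * b j * ind (i == j).
  apply: eq_big_nat => i /andP[_ hi].
  rewrite -(sum_nat_pick _ _ (fun j => a i * b j) hi).
  by apply: eq_bigr => j _; rewrite mul_ind eq_sym.
have E : forall W : nat -> nat -> R,
  \sum_(0 <= i < k) \sum_(0 <= j < k) a i * b j * W i j =
  \sum_(0 <= s < k) \sum_(0 <= t < k) c s * d t *
      (\sum_(0 <= i < k) \sum_(0 <= j < k) ind (i <= s)%N * ind (j <= t)%N * W i j).
  move=> W; rewrite -expand; apply: eq_big_nat => i /andP[_ hi].
  apply: eq_big_nat => j /andP[_ hj].
  by rewrite -hca // -hdb.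
rewrite !E; apply: ler_sum_nat => s /andP[_ hs]; apply: ler_sum_nat => t /andP[_ ht].
apply: ler_wpM2l; first by apply: mulr_ge0; [apply: hc0|apply: hd0].
by apply: key_block.
Qed.

Definition ip {R : realType} {m n : nat} (A B : 'M[R]_(m, n)) : R :=
  \sum_(i < m) \sum_(j < n) A i j * B i j.

Lemma ip_tr {R : realType} {m n : nat} (A B : 'M[R]_(m, n)) :
  ip A B = \tr (A^T *m B).
Proof.
rewrite /ip /mxtrace exchange_big; apply: eq_bigr => j _; rewrite mxE.
by apply: eq_bigr => i _; rewrite mxE.
Qed.

Lemma frob2_ip {R : realType} {m n : nat} (A : 'M[R]_(m, n)) : frob2 A = ip A A.
Proof. by rewrite /frob2 /ip; apply: eq_bigr => i _; apply: eq_bigr => j _; rewrite expr2. Qed.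

Lemma frob2B {R : realType} {m n : nat} (A B : 'M[R]_(m, n)) :
  frob2 (A - B) = frob2 A + frob2 B - 2 * ip A B.
Proof.
rewrite /frob2 /ip -big_split /= mulr_sumr -sumrB; apply: eq_bigr => i _.
rewrite -big_split /= mulr_sumr -sumrB; apply: eq_bigr => j _.
rewrite !mxE; ring.
Qed.

Lemma ortho_r {R : realType} {k : nat} (U : 'M[R]_k) : Defs.orthomx U -> U *m U^T = 1%:M.
Proof. by move/mulmx1C. Qed.

Lemma ortho_prod {R : realType} {k : nat} (A B : 'M[R]_k) :
  Defs.orthomx A -> Defs.orthomx B ->
  Defs.orthomx (A^T *m B) /\ (A^T *m B) *m (A^T *m B)^T = 1%:M.
Proof.
move=> hA hB; split.
  by rewrite /Defs.orthomx trmx_mul trmxK mulmxA -(mulmxA B^T) (ortho_r _ hA) mulmx1.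
rewrite trmx_mul trmxK mulmxA -(mulmxA A^T) (ortho_r _ hB) mulmx1; exact: hA.
Qed.

Lemma rownorm {R : realType} {k : nat} (P : 'M[R]_k) (i : nat) :
  P *m P^T = 1%:M -> (i < k)%N -> \sum_(0 <= j < k) mxf P i j ^+ 2 = 1.
Proof.
move=> hP hi.
have := congr1 (fun M : 'M[R]_k => M (Ordinal hi) (Ordinal hi)) hP.
rewrite /= mxE [in RHS]mxE eqxx /= => h; apply: etrans h.
rewrite big_mkord; apply: eq_bigr => j _.
by rewrite mxE (mxfN _ _ _ hi (ltn_ord j)) expr2; congr (P _ _ * P _ _); apply: val_inj.
Qed.

Lemma colnorm {R : realType} {k : nat} (P : 'M[R]_k) (j : nat) :
  P^T *m P = 1%:M -> (j < k)%N -> \sum_(0 <= i < k) mxf P i j ^+ 2 = 1.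
Proof.
move=> hP hj.
have := congr1 (fun M : 'M[R]_k => M (Ordinal hj) (Ordinal hj)) hP.
rewrite /= mxE [in RHS]mxE eqxx /= => h; apply: etrans h.
rewrite big_mkord; apply: eq_bigr => i _.
by rewrite mxE (mxfN _ _ _ (ltn_ord i) hj) expr2; congr (P _ _ * P _ _); apply: val_inj.
Qed.

Lemma pick_ord {R : realType} (k i : nat) (F : nat -> R) :
  \sum_(j < k) (if (j : nat) == i then F j else 0) = if (i < k)%N then F i else 0.
Proof.
case: ifP => hi.
  by rewrite -(big_mkord xpredT (fun j => if j == i then F j else 0)) sum_nat_pick.
rewrite big1 // => j _; case: eqP => // hj.
by move: (ltn_ord j); rewrite hj hi.
Qed.

Lemma restrict {R : realType} (m n : nat) (G : nat -> R) :
  (forall i, (m <= i)%N -> G i = 0) ->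
  \sum_(0 <= i < n) G i = \sum_(0 <= i < minn m n) G i.
Proof.
move=> hG; case: (leqP m n) => h.
  rewrite (big_cat_nat (leq0n m) h) /= [X in _ + X]big_nat_cond.
  by rewrite [X in _ + X]big1 ?addr0 // => i /andP[/andP[hi _] _]; apply: hG.
by [].
Qed.

Lemma ifmul0 {R : realType} (c : bool) (x y : R) :
  (if c then x else 0) * y = if c then x * y else 0.
Proof. by case: c; rewrite ?mul0r. Qed.

Lemma entry_DP {R : realType} {m n : nat} (a : nat -> R) (P : 'M[R]_m) :
  (rdiag m n a)^T *m P = \matrix_(i < n, l < m) (a i * mxf P i l).
Proof.
apply/matrixP => i l; rewrite !mxE.
under eq_bigr => j _ do rewrite !mxE -(mxfE P) ifmul0.
rewrite (pick_ord m i (fun j => a j * mxf P j l)).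
by case: ifP => // hi; rewrite mxf0l ?mulr0 // leqNgt hi.
Qed.

Lemma mulif0 {R : realType} (c : bool) (x y : R) :
  x * (if c then y else 0) = if c then x * y else 0.
Proof. by case: c; rewrite ?mulr0. Qed.

Lemma entry_DPD {R : realType} {m n : nat} (a b : nat -> R) (P : 'M[R]_m) :
  (rdiag m n a)^T *m P *m rdiag m n b
  = \matrix_(i < n, t < n) (a i * b t * mxf P i t).
Proof.
rewrite entry_DP; apply/matrixP => i t; rewrite !mxE.
under eq_bigr => l _ do rewrite !mxE mulif0.
rewrite (pick_ord m t (fun l => a i * mxf P i l * b l)).
case: ifP => ht; first by rewrite mulrAC.
by rewrite mxf0r ?mulr0 // leqNgt ht.
Qed.

Lemma tr_formula {R : realType} {m n : nat} (a b : nat -> R) (P : 'M[R]_m)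
  (Q : 'M[R]_n) :
  \tr ((rdiag m n a)^T *m P *m rdiag m n b *m Q) =
  \sum_(0 <= i < minn m n) \sum_(0 <= j < minn m n)
     a i * b j * (mxf P i j * mxf Q j i).
Proof.
rewrite entry_DPD /mxtrace.
transitivity (\sum_(0 <= i < n) \sum_(0 <= j < n) a i * b j * (mxf P i j * mxf Q j i)).
  rewrite big_mkord; apply: eq_bigr => i _; rewrite mxE big_mkord.
  by apply: eq_bigr => j _; rewrite mxE -(mxfE Q) mulrA.
rewrite (restrict m); last first.
  move=> i hi; rewrite big1 // => j _.
  by rewrite mxf0l // mul0r mulr0.
apply: eq_bigr => i _; rewrite (restrict m) // => j hj.
by rewrite mxf0r // mul0r mulr0.
Qed.

Lemma ip_svd {R : realType} {m n : nat} (U1 U2 : 'M[R]_m) (V1 V2 : 'M[R]_n)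
  (a b : nat -> R) :
  ip (U1 *m rdiag m n a *m V1^T) (U2 *m rdiag m n b *m V2^T) =
  \sum_(0 <= i < minn m n) \sum_(0 <= j < minn m n)
     a i * b j * (mxf (U1^T *m U2) i j * mxf (V2^T *m V1) j i).
Proof.
rewrite ip_tr -tr_formula.
have -> : (U1 *m rdiag m n a *m V1^T)^T *m (U2 *m rdiag m n b *m V2^T) =
  V1 *m ((rdiag m n a)^T *m (U1^T *m U2) *m rdiag m n b *m V2^T).
  by rewrite !trmx_mul trmxK !mulmxA.
by rewrite mxtrace_mulC !mulmxA.
Qed.

Lemma mxf1 {R : realType} {m : nat} (i j : nat) :
  (i < m)%N -> (j < m)%N -> mxf (1%:M : 'M[R]_m) i j = ind (i == j).
Proof. by move=> hi hj; rewrite (mxfN _ _ _ hi hj) mxE -val_eqE. Qed.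

Lemma ip_same {R : realType} {m n : nat} (U : 'M[R]_m) (V : 'M[R]_n)
  (a b : nat -> R) : Defs.orthomx U -> Defs.orthomx V ->
  ip (U *m rdiag m n a *m V^T) (U *m rdiag m n b *m V^T) =
  \sum_(0 <= i < minn m n) a i * b i.
Proof.
move=> hU hV; rewrite ip_svd (_ : U^T *m U = 1%:M) // (_ : V^T *m V = 1%:M) //.
apply: eq_big_nat => i /andP[_ hi].
rewrite -(sum_nat_pick _ _ (fun j => a i * b j) hi).
apply: eq_big_nat => j /andP[_ hj].
have him := leq_trans hi (geq_minl m n); have hin := leq_trans hi (geq_minr m n).
have hjm := leq_trans hj (geq_minl m n); have hjn := leq_trans hj (geq_minr m n).
rewrite !mxf1 // [j == i]eq_sym; case: eqP => _; rewrite /ind /= ?mulr1 ?mulr0 //.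
Qed.

Lemma amgm {R : realType} (x y : R) : `|x * y| <= 2^-1 * (x ^+ 2 + y ^+ 2).
Proof.
rewrite normrM -(real_normK (num_real x)) -(real_normK (num_real y)).
have := sqr_ge0 (`|x| - `|y|).
set u := `|x|; set v := `|y|; move=> h.
nra.
Qed.

Lemma sum_amgm {R : realType} (k : nat) (F G : nat -> R) :
  \sum_(0 <= j < k) F j ^+ 2 <= 1 -> \sum_(0 <= j < k) G j ^+ 2 <= 1 ->
  \sum_(0 <= j < k) `|F j * G j| <= 1.
Proof.
move=> hF hG.
apply: (@le_trans _ _ (\sum_(0 <= j < k) 2^-1 * (F j ^+ 2 + G j ^+ 2))).
  by apply: ler_sum_nat => j _; apply: amgm.
rewrite -mulr_sumr big_split /=; lra.
Qed.

Lemma vonneumann {R : realType} {m n : nat} (U1 U2 : 'M[R]_m) (V1 V2 : 'M[R]_n)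
  (a b : nat -> R) :
  Defs.orthomx U1 -> Defs.orthomx U2 -> Defs.orthomx V1 -> Defs.orthomx V2 ->
  (forall i, (i < minn m n)%N -> 0 <= a i) ->
  (forall i j, (i <= j)%N -> (j < minn m n)%N -> a j <= a i) ->
  (forall i, (i < minn m n)%N -> 0 <= b i) ->
  (forall i j, (i <= j)%N -> (j < minn m n)%N -> b j <= b i) ->
  ip (U1 *m rdiag m n a *m V1^T) (U2 *m rdiag m n b *m V2^T) <=
  \sum_(0 <= i < minn m n) a i * b i.
Proof.
move=> hU1 hU2 hV1 hV2 ha0 ham hb0 hbm.
rewrite ip_svd.
have [hP1 hP2] := ortho_prod _ _ hU1 hU2; have [hQ1 hQ2] := ortho_prod _ _ hV2 hV1.
set P := U1^T *m U2 in hP1 hP2 *; set Q := V2^T *m V1 in hQ1 hQ2 *.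
apply: (abel _ _ _ (fun i j => mxf P i j * mxf Q j i)) => //.
  move=> i hi.
  have him := leq_trans hi (geq_minl m n); have hin := leq_trans hi (geq_minr m n).
  apply: (sum_amgm _ (fun j => mxf P i j) (fun j => mxf Q j i)).
    apply: le_trans (sum_nat_le _ _ _ (geq_minl m n) _) _.
      by move=> *; apply: sqr_ge0.
    by rewrite (rownorm _ _ hP2).
  apply: le_trans (sum_nat_le _ _ _ (geq_minr m n) _) _.
    by move=> *; apply: sqr_ge0.
  by rewrite (colnorm _ _ hQ1).
move=> j hj.
have hjm := leq_trans hj (geq_minl m n); have hjn := leq_trans hj (geq_minr m n).
apply: (sum_amgm _ (fun i => mxf P i j) (fun i => mxf Q j i)).
  apply: le_trans (sum_nat_le _ _ _ (geq_minl m n) _) _.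
    by move=> *; apply: sqr_ge0.
  by rewrite (colnorm _ _ hP1).
apply: le_trans (sum_nat_le _ _ _ (geq_minr m n) _) _.
  by move=> *; apply: sqr_ge0.
by rewrite (rownorm _ _ hQ2).
Qed.

Lemma frob2_svd {R : realType} {m n : nat} (U : 'M[R]_m) (V : 'M[R]_n) (a : nat -> R) :
  Defs.orthomx U -> Defs.orthomx V ->
  frob2 (U *m rdiag m n a *m V^T) = \sum_(0 <= i < minn m n) a i ^+ 2.
Proof.
by move=> hU hV; rewrite frob2_ip ip_same //; apply: eq_bigr => i _; rewrite expr2.
Qed.

Lemma sumsq_expand {R : realType} (k : nat) (s t : nat -> R) :
  \sum_(0 <= i < k) (s i - t i) ^+ 2 =
  \sum_(0 <= i < k) s i ^+ 2 + \sum_(0 <= i < k) t i ^+ 2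
  - 2 * \sum_(0 <= i < k) s i * t i.
Proof.
rewrite -big_split /= mulr_sumr -sumrB; apply: eq_bigr => i _; ring.
Qed.

Lemma sum_split0 {R : realType} (r k : nat) (F : nat -> R) : (r <= k)%N ->
  \sum_(0 <= i < k) F i = \sum_(0 <= i < r) F i + \sum_(r <= i < k) F i.
Proof. by move=> h; rewrite (big_cat_nat (leq0n r) h). Qed.

Lemma sum_le0_eq {R : realType} (k : nat) (F : nat -> R) :
  (forall i, 0 <= F i) -> \sum_(0 <= i < k) F i <= 0 ->
  forall i, (i < k)%N -> F i = 0.
Proof.
move=> h0 hle i hi.
have hs : \sum_(0 <= i < k) F i = 0.
  by apply/le_anti; rewrite hle /=; apply: sumr_ge0 => j _; apply: h0.
rewrite big_mkord in hs.
have := @psumr_eq0P _ _ _ (fun j : 'I_k => F j) (fun j _ => h0 j) hs (Ordinal hi).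
by apply.
Qed.

Lemma r_le_k {R : realType} (theta : R) (m n : nat) :
  0 <= theta -> theta <= 1 -> (trunc_rank theta m n <= minn m n)%N.
Proof.
move=> h0 h1; rewrite /trunc_rank.
have hx0 : 0 <= theta * (minn m n)%:R by apply: mulr_ge0.
have hc0 : (0 <= Num.ceil (theta * (minn m n)%:R))%R.
  by rewrite ceil_ge0; apply: lt_le_trans hx0; rewrite ltrN10.
rewrite -lez_nat gez0_abs // ceil_le_int.
rewrite (_ : ((minn m n : nat) : int)%:~R = (minn m n)%:R :> R) //.
by apply: ler_piMl.
Qed.

Lemma lower_bound {R : realType} {m n : nat} (U1 U : 'M[R]_m) (V1 V : 'M[R]_n)
  (s t : nat -> R) :
  Defs.orthomx U1 -> Defs.orthomx U -> Defs.orthomx V1 -> Defs.orthomx V ->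
  (forall i, (i < minn m n)%N -> 0 <= s i) ->
  (forall i j, (i <= j)%N -> (j < minn m n)%N -> s j <= s i) ->
  (forall i, (i < minn m n)%N -> 0 <= t i) ->
  (forall i j, (i <= j)%N -> (j < minn m n)%N -> t j <= t i) ->
  \sum_(0 <= i < minn m n) (s i - t i) ^+ 2 <=
  frob2 (U1 *m rdiag m n s *m V1^T - U *m rdiag m n t *m V^T).
Proof.
move=> hU1 hU hV1 hV hs0 hsm ht0 htm.
rewrite frob2B !frob2_svd // sumsq_expand.
have := vonneumann _ _ _ _ _ _ hU1 hU hV1 hV hs0 hsm ht0 htm.
lra.
Qed.

Lemma delta_obj_split {R : realType} (lambda p : R) (r k : nat) (sigma d : nat -> R) :
  delta_obj lambda p r k sigma d =
  lambda * \sum_(r <= i < k) powR (d i) p +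
  2^-1 * \sum_(r <= i < k) (d i - sigma i) ^+ 2.
Proof. by rewrite /delta_obj big_split /= !mulr_sumr. Qed.

Lemma clip {R : realType} (lambda p : R) (r k : nat) (sigma delta : nat -> R) :
  0 < lambda -> 0 < p ->
  (forall i, (i < k)%N -> 0 <= sigma i) ->
  (forall i j, (i <= j)%N -> (j < k)%N -> sigma j <= sigma i) ->
  delta_feasible r k delta ->
  (forall d, delta_feasible r k d ->
     delta_obj lambda p r k sigma delta <= delta_obj lambda p r k sigma d) ->
  (r < k)%N -> delta r <= sigma r.
Proof.
move=> hl hp hs0 hsm [hd0 hdm] hopt hrk.
rewrite leNgt; apply/negP => hlt.
pose c := sigma r.
have hc0 : 0 <= c by apply: hs0.
pose d' i := Num.min (delta i) c.
have hf : delta_feasible r k d'.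
  split.
    move=> i hri hik; rewrite /d' le_min hd0 //=.
  move=> i j hri hij hjk; rewrite /d' le_min; apply/andP; split; rewrite ge_min.
    by rewrite hdm.
  by rewrite lexx orbT.
have := hopt d' hf; rewrite /delta_obj.
have hstrict : forall i, (r <= i)%N -> (i < k)%N -> c < delta i ->
    lambda * powR c p + 2^-1 * (c - sigma i) ^+ 2 <
    lambda * powR (delta i) p + 2^-1 * (delta i - sigma i) ^+ 2.
  move=> i hri hik hci.
  have hsi : sigma i <= c by apply: hsm.
  have h1 : powR c p < powR (delta i) p.
    apply: (gt0_ltr_powR hp) => //.
    rewrite nnegrE; exact: le_trans hc0 (ltW hci).
  have h2 : lambda * powR c p < lambda * powR (delta i) p by rewrite ltr_pM2l.
  have h3 : (c - sigma i) ^+ 2 <= (delta i - sigma i) ^+ 2.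
    have : 0 <= c - sigma i by rewrite subr_ge0.
    have : c - sigma i <= delta i - sigma i by rewrite lerD2r ltW.
    move=> ha hb; nra.
  lra.
have hle : forall i, (r <= i)%N -> (i < k)%N ->
    lambda * powR (d' i) p + 2^-1 * (d' i - sigma i) ^+ 2 <=
    lambda * powR (delta i) p + 2^-1 * (delta i - sigma i) ^+ 2.
  move=> i hri hik; rewrite /d'; case: (leP (delta i) c) => hdc.
    by [].
  by apply: ltW; apply: hstrict.
rewrite !(big_ltn hrk) leNgt => /negP; apply.
apply: ltr_leD.
  rewrite /d' (min_r (ltW hlt)); exact: hstrict.
apply: ler_sum_nat => i /andP[hri hik]; apply: hle => //; exact: ltnW.
Qed.

Theorem theorem1 (R : realType) (m n : nat) (theta p lambda : R)
    (Y : 'M[R]_(m, n)) (U : 'M[R]_m) (V : 'M[R]_n) (sigma delta : nat -> R) :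
  (1 <= m)%N -> (1 <= n)%N ->
  0 <= theta -> theta <= 1 ->
  0 < p -> p < 1 ->
  0 < lambda ->
  is_svd Y U sigma V ->
  delta_feasible (trunc_rank theta m n) (minn m n) delta ->
  (forall d : nat -> R, delta_feasible (trunc_rank theta m n) (minn m n) d ->
     delta_obj lambda p (trunc_rank theta m n) (minn m n) sigma delta
     <= delta_obj lambda p (trunc_rank theta m n) (minn m n) sigma d) ->
  let Delta := fun i => if (i < trunc_rank theta m n)%N then sigma i else delta i in
  let Mopt := U *m rdiag m n Delta *m V^T in
  forall (M : 'M[R]_(m, n)) (sM sopt : nat -> R),
    is_singvals M sM -> is_singvals Mopt sopt ->
    objective theta p lambda Y Mopt sopt <= objective theta p lambda Y M sM.
Proof.
move=> hm hn ht0 ht1 hp0 hp1 hl [hU hV hY hs0 hsm] hfeas hopt Delta Mopt M sM sopt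
  [U1 [V1 [hU1 hV1 hM hsM0 hsMm]]] [U2 [V2 [hU2 hV2 hMo hso0 hsom]]].
have hrk : (trunc_rank theta m n <= minn m n)%N by apply: r_le_k.
have hclip := clip _ _ _ _ _ _ hl hp0 hs0 hsm hfeas hopt.
case: (hfeas) => hd0 hdm.
have hD0 : forall i, (i < minn m n)%N -> 0 <= Delta i.
  move=> i hi; rewrite /Delta; case: ltnP => h; first exact: hs0.
  exact: hd0.
have hDm : forall i j, (i <= j)%N -> (j < minn m n)%N -> Delta j <= Delta i.
  move=> i j hij hjk; rewrite /Delta; case: (ltnP j _) => hjr.
    by rewrite (leq_ltn_trans hij hjr); apply: hsm.
  case: (ltnP i _) => hir; last exact: hdm.
  have hrk' := leq_ltn_trans hjr hjk.
  apply: le_trans (hdm _ _ (leqnn _) hjr hjk) _.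
  apply: le_trans (hclip hrk') _.
  exact: hsm (ltnW hir) hrk'.
have hsopt : forall i, (i < minn m n)%N -> sopt i = Delta i.
  have f1 : frob2 Mopt = \sum_(0 <= i < minn m n) sopt i ^+ 2.
    by rewrite hMo frob2_svd.
  have f2 : frob2 Mopt = \sum_(0 <= i < minn m n) Delta i ^+ 2.
    by rewrite /Mopt frob2_svd.
  have vn : ip Mopt Mopt <= \sum_(0 <= i < minn m n) sopt i * Delta i.
    rewrite {1}hMo; exact: vonneumann.
  have hsq : \sum_(0 <= i < minn m n) (sopt i - Delta i) ^+ 2 <= 0.
    rewrite sumsq_expand -f1 -f2 frob2_ip; lra.
  move=> i hi; have := @sum_le0_eq _ _ (fun j => (sopt j - Delta j) ^+ 2) (fun j => sqr_ge0 (sopt j - Delta j)) hsq _ hi.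
  by move/eqP; rewrite sqrf_eq0 subr_eq0 => /eqP.
have hobjopt : objective theta p lambda Y Mopt sopt =
    delta_obj lambda p (trunc_rank theta m n) (minn m n) sigma delta.
  rewrite /objective /trunc_schatten_pow delta_obj_split.
  congr (_ * _ + _ * _).
    apply: eq_big_nat => i /andP[hri hik]; rewrite hsopt // /Delta ltnNge hri //.
  rewrite /Mopt hY frob2B !frob2_svd // ip_same // -sumsq_expand (sum_split0 _ _ _ hrk).
  rewrite [X in X + _]big_nat_cond [X in X + _]big1 ?add0r.
    by apply: eq_big_nat => i /andP[hri hik]; rewrite /Delta ltnNge hri.
  by move=> i /andP[/andP[_ hir] _]; rewrite /Delta hir subrr expr0n.
have hfeasM : delta_feasible (trunc_rank theta m n) (minn m n) sM.
  split; first by move=> i _ hi; apply: hsM0.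
  by move=> i j _ hij hjk; apply: hsMm.
rewrite hobjopt; apply: le_trans (hopt sM hfeasM) _.
rewrite /objective /trunc_schatten_pow delta_obj_split lerD2l.
rewrite ler_pM2l ?invr_gt0 ?ltr0n //.
apply: le_trans (_ : _ <= \sum_(0 <= i < minn m n) (sM i - sigma i) ^+ 2) _.
  rewrite (sum_split0 _ _ _ hrk) lerDr.
  by apply: sumr_ge0 => i _; apply: sqr_ge0.
by rewrite hM hY; apply: lower_bound.
Qed.
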